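(* Let $B, C \in \mathbb{Z}$ be such that $x^2 + Bx + C$ is irreducible, and let $\beta$ be a real root of it. (i) If $B \geq 0$ and $C > 0$, then $p_\beta(\alpha) = \infty$ for all $\alpha \in \mathbb{Z}[\beta]$. (ii) If $B > 0$ and $-B - 1 < C < 0$, then $p_\beta(\alpha) \in \{0, 1, \infty\}$ for every $\alpha \in \mathbb{R}$. Moreover, if $\alpha = c_j\beta^j + c_{j-1}\beta^{j-1} + \dots + c_1\beta + c_0$ with all $c_i \in \mathbb{Z}_{\geq 0}$, then $p_\beta(\alpha) = 1$ if and only if $c_i \in \{0, 1, \ldots, -C-1\}$ for every $i$.
   Context: For $\beta, \alpha \in \mathbb{C}$, $p_\beta(\alpha) \in \mathbb{Z}_{\geq 0}\cup\{\infty\}$ is the number of polynomials $f \in \mathbb{Z}_{\geq 0}[x]$ (non-negative integer coefficients) with $f(\beta) = \alpha$. *)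

(* Defs.v *)
From HB Require Import structures.
From mathcomp Require Import all_boot all_order all_algebra.
From mathcomp Require Import finmap boolp classical_sets cardinality reals.
Set Implicit Arguments. Unset Strict Implicit. Unset Printing Implicit Defensive.
Import Order.TTheory GRing.Theory Num.Theory.
Local Open Scope ring_scope.
Local Open Scope classical_set_scope.

Definition quad (R : nzRingType) (B C : int) : {poly R} :=
  'X^2 + (B%:~R : R) *: 'X + (C%:~R : R)%:P.

Definition zeval (R : realType) (f : {poly int}) (beta : R) : R :=
  (map_poly (fun z : int => z%:~R : R) f).[beta].

Definition nonneg_poly (f : {poly int}) : Prop := forall i : nat, 0 <= f`_i.

Definition rep_set (R : realType) (beta alpha : R) : set {poly int} :=
  [set f | nonneg_poly f /\ zeval f beta = alpha].

(* p_beta(alpha) in Z_{>=0} \cup {oo}: Some n = n, None = infinity. *)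
Definition p_beta (R : realType) (beta alpha : R) : option nat :=
  if pselect (finite_set (rep_set beta alpha))
  then Some #|` fset_set (rep_set beta alpha)|
  else None.

Definition in_Zbeta (R : realType) (beta alpha : R) : Prop :=
  exists g : {poly int}, zeval g beta = alpha.

(* Main.v *)
Require Import Defs.
From HB Require Import structures.
From mathcomp Require Import all_boot all_order all_algebra.
From mathcomp Require Import finmap boolp classical_sets cardinality reals.
From mathcomp Require Import zify.
Import Order.TTheory GRing.Theory Num.Theory.
Local Open Scope ring_scope.

Lemma zevalM (R : realType) (f g : {poly int}) (b : R) : zeval (f * g) b = zeval f b * zeval g b.
Proof. by rewrite /zeval rmorphM hornerM. Qed.
Lemma zevalB (R : realType) (f g : {poly int}) (b : R) : zeval (f - g) b = zeval f b - zeval g b.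
Proof. by rewrite /zeval rmorphB hornerD hornerN. Qed.
Lemma zevalD (R : realType) (f g : {poly int}) (b : R) : zeval (f + g) b = zeval f b + zeval g b.
Proof. by rewrite /zeval rmorphD hornerD. Qed.
Lemma zevalMn (R : realType) (f : {poly int}) (b : R) k : zeval (f *+ k) b = zeval f b *+ k.
Proof. by rewrite /zeval rmorphMn hornerMn. Qed.
Lemma zeval1 (R : realType) (b : R) : zeval 1 b = 1.
Proof. by rewrite /zeval rmorph1 hornerC. Qed.
Lemma zevalXn (R : realType) (b : R) n : zeval 'X^n b = b ^+ n.
Proof. rewrite /zeval.
apply: (eq_trans (f_equal (horner^~ b) (map_polyXn (intmul (1 : R) : {rmorphism int -> R}) n))). exact: hornerXn. Qed.

Lemma coef_quad (R : nzRingType) B C i : (quad R B C)`_i =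
  if i == 0%N then C%:~R else if i == 1%N then B%:~R else if i == 2%N then 1 else 0.
Proof.
rewrite /quad !coefD coefXn coefZ coefX coefC.
by case: i => [|[|[|i]]] /=; rewrite ?mulr0 ?mulr1 ?add0r ?addr0.
Qed.

Lemma coefQ B C i : (quad int B C)`_i =
  if i == 0%N then C else if i == 1%N then B else if i == 2%N then 1 else 0.
Proof. by rewrite coef_quad !intz. Qed.

Lemma map_quad (R1 R2 : nzRingType) (f : {rmorphism R1 -> R2}) B C :
  map_poly f (quad R1 B C) = quad R2 B C.
Proof.
apply/polyP => i; rewrite coef_map /= !coef_quad.
by case: i => [|[|[|i]]] /=; rewrite ?rmorph_int ?rmorph1 ?rmorph0.
Qed.

Lemma zevalQ (R : realType) B C (b : R) : root (quad R B C) b -> zeval (quad int B C) b = 0.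
Proof.
move/eqP; rewrite /zeval.
have -> : map_poly (fun z : int => z%:~R : R) (quad int B C) = quad R B C.
  apply/polyP => i; rewrite coef_map_id0 // !coef_quad.
  by case: i => [|[|[|i]]] /=; rewrite ?intz.
by [].
Qed.

Lemma Q1 B C : (quad int B C).[1] = 1 + B + C.
Proof. by rewrite /quad !hornerE !intz. Qed.

Lemma size_quad (R : nzRingType) B C : size (quad R B C) = 3%N.
Proof.
rewrite /quad -addrA size_addl size_polyXn //.
apply: (leq_ltn_trans (size_add _ _)).
rewrite gtn_max (leq_ltn_trans (size_scale_leq _ _)) ?size_polyX //.
by rewrite (leq_ltn_trans (size_polyC_leq1 _)).
Qed.

Lemma monic_quad B C : quad int B C \is monic.
Proof.
rewrite /quad -addrA monicE lead_coefDl ?lead_coefXn // size_polyXn.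
apply: (leq_ltn_trans (size_add _ _)).
rewrite gtn_max (leq_ltn_trans (size_scale_leq _ _)) ?size_polyX //.
by rewrite (leq_ltn_trans (size_polyC_leq1 _)).
Qed.

Lemma zeval_coef (R : realType) (r : {poly int}) (b : R) n : (size r <= n)%N ->
  zeval r b = \sum_(i < n) (r`_i)%:~R * b ^+ i.
Proof.
move=> sr; rewrite /zeval (horner_coef_wide (n := n)).
  by apply: eq_bigr => i _; rewrite coef_map_id0.
by apply: leq_trans (size_poly _ _) sr.
Qed.

Lemma not_finite_inj (T : choiceType) (A : set T) (u : nat -> T) :
  injective u -> (forall k, A (u k)) -> ~ finite_set A.
Proof.
move=> inj Au /finite_fsetP [X eX].
have sub : {subset map u (iota 0 (#|`X|.+1)) <= X}.
  by move=> y /mapP [k _ ->]; have := Au k; rewrite eX.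
have := uniq_leq_size _ sub; rewrite (map_inj_uniq inj) iota_uniq => /(_ isT).
by rewrite size_map size_iota ltnn.
Qed.

Lemma p_beta_None (R : realType) (b a : R) (u : nat -> {poly int}) (c : int) :
  0 < c -> (forall k, (u k).[1] = (u 0%N).[1] + c * k%:Z) ->
  (forall k, rep_set b a (u k)) -> p_beta b a = None.
Proof.
move=> c0 H Hr; rewrite /p_beta; case: pselect => // fin; exfalso.
apply: (@not_finite_inj _ _ u _ Hr fin) => k l e.
have h1 := H k; have h2 := H l; rewrite e in h1.
have : c * k%:Z = c * l%:Z by apply: (addrI ((u 0%N).[1])); rewrite -h1 -h2.
move=> E; clear -E c0; nia.
Qed.

Lemma p_beta0 (R : realType) (b a : R) : rep_set b a = set0 -> p_beta b a = Some 0%N.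
Proof.
move=> E; rewrite /p_beta E; case: pselect => [H|H]; last by case: H; exact: finite_set0.
by rewrite fset_set0 cardfs0.
Qed.

Lemma p_beta1 (R : realType) (b a : R) f : rep_set b a = [set f]%classic -> p_beta b a = Some 1%N.
Proof.
move=> E; rewrite /p_beta E; case: pselect => [H|H]; last by case: H; exact: finite_set1.
by rewrite fset_set1 cardfs1.
Qed.

Fixpoint chain (Q f : {poly int}) (i k : nat) : {poly int} :=
  if k is k'.+1 then chain Q f i k' + Q * 'X^(i + k') else f.

Lemma chain_ok B C f i : 0 <= B -> 0 <= C + B -> nonneg_poly f -> -C <= f`_i ->
  forall k, nonneg_poly (chain (quad int B C) f i k) /\
            -C <= (chain (quad int B C) f i k)`_(i + k).
Proof.
move=> hB hCB hf hi; elim=> [|k [IHn IHc]] /=; first by rewrite addn0.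
set g := chain _ _ _ _ in IHn IHc *.
have key m : (g + quad int B C * 'X^(i + k))`_m =
    g`_m + (if (m < i + k)%N then 0 else (quad int B C)`_(m - (i + k))).
  by rewrite coefD coefMXn.
split.
- move=> m; rewrite key; case: ltnP => [_|le]; first by rewrite addr0 IHn.
  have := IHn m; rewrite coefQ -(subnKC le).
  rewrite addKn; move: IHc; case: (m - (i + k))%N => [|[|[|d]]] /=.
  + rewrite addn0; lia.
  + move=> _ h; lia.
  + move=> _ h; lia.
  + move=> _ h; lia.
- rewrite addnS key ltnNge leqnSn /= subSnn coefQ /=.
  have h2 : -C <= B by lia.
  by apply: ler_wpDl; [exact: IHn | exact: h2].
Qed.

Lemma aux1 (x c : int) (k : nat) : x + c * k%:Z + c = x + c * (k.+1)%:Z.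
Proof. by rewrite intS mulrDr mulr1 [X in _ = _ + X]addrC addrA. Qed.

Lemma chain_one B C f i k :
  (chain (quad int B C) f i k).[1] = f.[1] + (quad int B C).[1] * k%:Z.
Proof.
elim: k => [|k IH] /=; first by rewrite mulr0 addr0.
rewrite hornerD hornerM hornerXn expr1n mulr1 IH.
by rewrite intS mulrDr mulr1 -addrA (addrC (_ * _)).
Qed.

Lemma chain_zeval (R : realType) B C (b : R) f i k : root (quad R B C) b ->
  zeval (chain (quad int B C) f i k) b = zeval f b.
Proof.
move=> rb; elim: k => [|k IH] //=.
by rewrite zevalD zevalM zevalQ // mul0r addr0 IH.
Qed.

Lemma coef_mulQ B C (q : {poly int}) n : (q * quad int B C)`_n =
  (if n is n'.+2 then q`_n' else 0) + B * (if n is n'.+1 then q`_n' else 0) + C * q`_n.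
Proof.
rewrite /quad !mulrDr !coefD coefMXn -scalerAr coefZ coefMX coefMC !intz.
case: n => [|[|n]] /=; rewrite ?mulr0 ?add0r ?addr0.
- exact: mulrC.
- by rewrite [q`_1 * C]mulrC.
- by rewrite subSS subSS subn0 [q`_n.+2 * C]mulrC.
Qed.


Lemma aux_step (B C a b x : int) : C < 0 -> -C <= B -> 0 <= a -> 0 <= b ->
  a + B * b + C * x <= -C - 1 -> b <= x.
Proof. move=> *; nia. Qed.

Lemma aux_le (a b c : int) : 0 <= b -> a <= c -> a - b <= c.
Proof. move=> *; lia. Qed.

Lemma aux_base (C x : int) : C < 0 -> C * x <= -C - 1 -> 0 <= x.
Proof. move=> *; nia. Qed.

Arguments aux_base {C x}.
Arguments aux_step {B C a b x}.
Arguments aux_le {a b c}.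

Lemma uniq_rep (R : realType) B C (b : R) (f g : {poly int}) :
  irreducible_poly (quad rat B C) -> root (quad R B C) b -> C < 0 -> -C <= B ->
  (forall n, f`_n <= -C - 1) -> nonneg_poly g -> zeval f b = zeval g b -> g = f.
Proof.
move=> irr rb C0 CB fs gn E.
have mQ : quad int B C \is monic := monic_quad B C.
pose h := f - g.
have hz : zeval h b = 0 by rewrite zevalB E subrr.
have dq := Pdiv.IdomainMonic.divp_eq mQ h.
move: dq; set q := h %/ _; set r := h %% _ => dq.
have sr : (size r < 3)%N by rewrite -(size_quad int B C) ltn_modp monic_neq0.
have zr : zeval r b = 0 by move: hz; rewrite dq zevalD zevalM zevalQ // mulr0 add0r.
have r0 : r = 0.
  have := @zeval_coef R r b 2 sr.
  rewrite zr !big_ord_recr big_ord0 /= expr0 expr1 mulr1 add0r => /esym /eqP.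
  rewrite addr_eq0 => /eqP e.
  have r1 : r`_1 = 0.
    apply/eqP/negPn/negP => r1.
    have r1R : (r`_1)%:~R != (0 : R) by rewrite intr_eq0.
    pose a : rat := - (r`_0)%:~R / (r`_1)%:~R.
    have ab : ratr a = b.
      rewrite fmorph_div rmorphN !rmorph_int e opprK (mulrC _ b) mulfK //.
    have rt : root (quad rat B C) a.
      move: rb; rewrite -ab -(map_quad _ _ (ratr : {rmorphism rat -> R})) /root horner_map.
      by rewrite fmorph_eq0.
    case: irr => _ /(_ ('X - a%:P)); rewrite size_XsubC dvdp_XsubCl rt.
    by move=> /(_ isT isT) /eqp_size; rewrite size_XsubC size_quad.
  have r0' : r`_0 = 0.
    by apply/eqP; rewrite -(intr_eq0 R) e r1 mul0r oppr0.
  apply/polyP => i; rewrite coef0; case: i => [|[|i]] //.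
  by rewrite nth_default //; apply: (@leq_trans 2); [exact: sr | ].
have hq : h = q * quad int B C by rewrite {1}dq r0 addr0.
have hle n : (q * quad int B C)`_n <= -C - 1.
  rewrite -hq coefB; apply: aux_le; [exact: gn | exact: fs].
have mono n : 0 <= q`_n /\ 0 <= q`_n.+1 /\ q`_n <= q`_n.+1.
  elim: n => [|n [IH1 [IH2 IH3]]].
    have h0 := hle 0%N; have h1 := hle 1%N; rewrite !coef_mulQ /= in h0 h1.
    have q0 : 0 <= q`_0 by apply: (aux_base C0); move: h0; rewrite mulr0 !add0r.
    split=> //; have q1 : q`_0 <= q`_1.
      by apply: (aux_step C0 CB (lexx 0) q0); move: h1.
    by split=> //; apply: le_trans q1.
  have h2 := hle n.+2; rewrite coef_mulQ /= in h2.
  have q2 : q`_n.+1 <= q`_n.+2 by apply: (aux_step C0 CB IH1 IH2 h2).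
  by split=> //; split=> //; apply: le_trans q2.
have mono2 k n : q`_k <= q`_(k + n).
  elim: n => [|n IH]; first by rewrite addn0.
  by rewrite addnS; apply: le_trans IH (mono _).2.2.
have q0 : q = 0.
  apply/polyP => k; rewrite coef0; apply/eqP; rewrite eq_le (mono k).1 andbT.
  by have := mono2 k (size q); rewrite [q`_(k + _)]nth_default // leq_addl.
by apply/esym/eqP; rewrite -subr_eq0 -/h hq q0 mul0r.
Qed.

Lemma aux_lt {x C : int} : -C - 1 < x -> -C <= x.
Proof. move=> *; lia. Qed.
Lemma aux_CB {B C : int} : -B - 1 < C -> -C <= B.
Proof. move=> *; lia. Qed.
Lemma aux_c0 {B C : int} : -B - 1 < C -> 0 < 1 + B + C.
Proof. move=> *; lia. Qed.
Lemma aux_c0' {B C : int} : 0 <= B -> 0 < C -> 0 < 1 + B + C.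
Proof. move=> *; lia. Qed.
Lemma aux_CB2 {B C : int} : -B - 1 < C -> 0 <= C + B.
Proof. move=> *; lia. Qed.
Lemma aux_max (x : int) : Num.max x 0 - Num.max (- x) 0 = x.
Proof. lia. Qed.
Lemma aux_C1 {C : int} : 0 < C -> 0 <= C - 1.
Proof. move=> *; lia. Qed.

Theorem proposition8 (R : realType) (B C : int) (beta : R) :
  irreducible_poly (quad rat B C) ->
  root (quad R B C) beta ->
  ((0 <= B) -> (0 < C) ->
     forall alpha : R, in_Zbeta beta alpha -> p_beta beta alpha = None)
  /\
  ((0 < B) -> (- B - 1 < C) -> (C < 0) ->
     (forall alpha : R,
        p_beta beta alpha = Some 0%N \/ p_beta beta alpha = Some 1%N
        \/ p_beta beta alpha = None)
     /\
     (forall f : {poly int}, nonneg_poly f ->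
        (p_beta beta (zeval f beta) = Some 1%N <->
         forall i : nat, f`_i <= - C - 1))).
Proof.
move=> irr rt; split.
  move=> B0 C0 alpha [g <-].
  pose gp := \poly_(i < size g) Num.max g`_i 0.
  pose gn := \poly_(i < size g) Num.max (- g`_i) 0.
  have eg : g = gp - gn.
    apply/polyP => i; rewrite coefB !coef_poly; case: ltnP => hi.
      by rewrite aux_max.
    by rewrite nth_default // subrr.
  pose f0 := gp + gn * (quad int B C - 1).
  have nn0 : nonneg_poly f0.
    move=> i; rewrite coefD coefM; apply: addr_ge0.
      by rewrite coef_poly; case: ifP => _ //; rewrite le_max lexx orbT.
    apply: sumr_ge0 => j _; apply: mulr_ge0.
      by rewrite coef_poly; case: ifP => _ //; rewrite le_max lexx orbT.
    rewrite coefB coef1 coefQ; case: (i - j)%N => [|[|[|k]]] /=.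
    - exact: aux_C1.
    - by rewrite subr0.
    - by rewrite subr0.
    - by rewrite subr0.
  have zf0 : zeval f0 beta = zeval g beta.
    by rewrite zevalD zevalM zevalB zevalQ // zeval1 sub0r mulrN1 [in RHS]eg zevalB.
  pose u k := f0 + quad int B C *+ k.
  apply: (@p_beta_None R beta _ u (1 + B + C)).
  - exact: aux_c0'.
  - by move=> k; rewrite /u !hornerD !hornerMn Q1 mulr0n addr0 -mulr_natr natz.
  - move=> k; split.
      move=> i; rewrite coefD coefMn; apply: addr_ge0 => //; apply: mulrn_wge0.
      by rewrite coefQ; case: i => [|[|[|i]]] /=; [exact: ltW | exact: B0 | by [] | by []].
    by rewrite /u zevalD zevalMn zevalQ // mul0rn addr0.
move=> B0 CB C0.
have CB' := aux_CB CB.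
have c0 := aux_c0 CB.
have chainNone : forall a f i, rep_set beta a f -> -C <= f`_i -> p_beta beta a = None.
  move=> a f i [nf zf] hi.
  apply: (@p_beta_None R beta _ (chain (quad int B C) f i) (1 + B + C) c0).
    by move=> k; rewrite !chain_one /= Q1 mulr0 addr0.
  move=> k; split.
    exact: (chain_ok B C f i (ltW B0) (aux_CB2 CB) nf hi k).1.
  by rewrite chain_zeval.
have smallOne : forall a f, rep_set beta a f -> (forall n, f`_n <= -C - 1) ->
    p_beta beta a = Some 1%N.
  move=> a f [nf zf] fs; apply: (@p_beta1 R beta a f); apply/seteqP; split => g.
    move=> [ng zg] /=; apply: (uniq_rep _ _ _ _ _ _ irr rt C0 CB' fs ng).
    by rewrite zf zg.
  by move=> /= ->; split.
split.
  move=> a; case: (pselect (exists f, rep_set beta a f)) => [[f rf]|nf].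
    case: (pselect (exists i, -C <= f`_i)) => [[i hi]|ns].
      by right; right; exact: chainNone rf hi.
    right; left; apply: smallOne rf _ => n.
    case: (lerP (f`_n) (-C - 1)) => // hn; exfalso; apply: ns.
    by exists n; apply: aux_lt.
  left; apply: p_beta0; apply/seteqP; split=> g // hg; apply: nf; exists g.
  exact: hg.
move=> f nf; split.
  move=> H n; case: (lerP (f`_n) (-C - 1)) => // hn.
  have := chainNone _ f n (conj nf erefl) (aux_lt hn).
  by rewrite H.
by move=> fs; exact: smallOne f (conj nf erefl) fs.
Qed.
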